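(* Let $1\leq e_1\leq\cdots\leq e_m$ be integers, let $b_i$ be integers with $0\leq b_i\leq e_i-1$ for $i=1,\ldots,m$, and let $b_0\geq1$ be an integer. Then for every $k=0,\ldots,m-1$, $$\prod_{i=1}^m(e_i-b_i)\geq\Big(\sum_{i=1}^{k+1}(e_i-b_i)-(k-1)-b_0-\sum_{i=k+2}^m b_i\Big)e_{k+2}\cdots e_m,$$ where for $k=m-1$ the product $e_{k+2}\cdots e_m$ is $1$ and the sum $\sum_{i=k+2}^m b_i$ is $0$. *)

(* Defs.v *)
From mathcomp Require Import all_boot all_order all_algebra.

(* Main.v *)
Require Import Defs.
From mathcomp Require Import all_boot all_order all_algebra.
From mathcomp Require Import ring lra.
Import Order.TTheory GRing.Theory Num.Theory.
Local Open Scope ring_scope.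

Lemma prod1p_ge0 (s : seq int) : (forall y, y \in s -> 0 <= y) -> 0 <= \prod_(y <- s) (1 + y).
Proof. move=> H; rewrite big_seq; apply: prodr_ge0 => y /H; lra. Qed.

Lemma sum_ge0s (s : seq int) : (forall y, y \in s -> 0 <= y) -> 0 <= \sum_(y <- s) y.
Proof. move=> H; rewrite big_seq; apply: sumr_ge0 => y /H //. Qed.

Arguments prod1p_ge0 {s}.
Arguments sum_ge0s {s}.

Lemma vtx (xs ys : seq int) :
  (forall x, x \in xs -> 0 <= x) -> (forall y, y \in ys -> 0 <= y) ->
  (forall x y, x \in xs -> y \in ys -> x <= y) ->
  (1 + \sum_(x <- xs) x - \sum_(y <- ys) y) * \prod_(y <- ys) (1 + y)
    <= \prod_(x <- xs) (1 + x).
Proof.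
elim: xs ys => [|x xs IH] ys Hx Hy Hxy.
  rewrite !big_nil addr0.
  elim: ys Hy {Hxy} => [|y ys IHy] Hy; first by rewrite !big_nil subr0 mulr1.
  rewrite !big_cons.
  have y0 : 0 <= y by apply: Hy; rewrite inE eqxx.
  have Hy' : forall z, z \in ys -> 0 <= z by move=> z hz; apply: Hy; rewrite inE hz orbT.
  have := IHy Hy'. have := prod1p_ge0 Hy'. have := sum_ge0s Hy'.
  set S := \sum_(_ <- _) _; set K := \prod_(_ <- _) _ => S0 K0 IH1.
  have h : 0 <= y * (y + S) * K by apply: mulr_ge0 => //; apply: mulr_ge0 => //; lra.
  nra.
rewrite !big_cons.
have x0 : 0 <= x by apply: Hx; rewrite inE eqxx.
have Hx' : forall z, z \in xs -> 0 <= z by move=> z hz; apply: Hx; rewrite inE hz orbT.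
have S0 := sum_ge0s Hx'.
set S := \sum_(_ <- xs) _; set P := \prod_(_ <- xs) _.
have Hxy' : forall a b, a \in xs -> b \in ys -> a <= b.
  by move=> a b ha hb; apply: Hxy => //; rewrite inE ha orbT.
have K0 := prod1p_ge0 Hy.
set T := \sum_(_ <- ys) _. set K := \prod_(_ <- ys) _.
rewrite -/S in S0. rewrite -/K in K0.
have [ht|ht] := lerP (x + 1) (1 + (x + S) - T).
  have IH1 := IH ys Hx' Hy Hxy'. rewrite -/S -/P -/T -/K in IH1.
  have h1 : 0 <= x * (1 + (x + S) - T - x - 1) * K by apply: mulr_ge0 => //; apply: mulr_ge0; lra.
  have h2 : 0 <= (1 + x) * (P - (1 + S - T) * K) by apply: mulr_ge0; lra.
  nra.
case: ys Hy Hxy Hxy' @T @K K0 ht => [|y ys] Hy Hxy Hxy' T K K0 ht.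
  rewrite /T big_nil in ht; lra.
have Hy' : forall z, z \in ys -> 0 <= z by move=> z hz; apply: Hy; rewrite inE hz orbT.
have Hxy'' : forall a b, a \in xs -> b \in ys -> a <= b.
  by move=> a b ha hb; apply: Hxy' => //; rewrite inE hb orbT.
have IH1 := IH ys Hx' Hy' Hxy''. rewrite -/S -/P in IH1.
have xy : x <= y by apply: Hxy; rewrite inE eqxx.
move: ht IH1; rewrite /T /K !big_cons.
have K1 := prod1p_ge0 Hy'.
set T' := \sum_(_ <- ys) _. set K' := \prod_(_ <- ys) _ => ht IH1.
have h1 : 0 <= (y - x) * (1 + x - (1 + (x + S) - (y + T'))) * K' by apply: mulr_ge0 => //; apply: mulr_ge0; lra.
have h2 : 0 <= (1 + x) * (P - (1 + S - T') * K') by apply: mulr_ge0; lra.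
nra.
Qed.

Lemma gen (xs : seq int) (js : seq (int * int)) : forall vs : seq int,
  (forall x, x \in xs -> 0 <= x) -> (forall y, y \in vs -> 0 <= y) ->
  (forall x y, x \in xs -> y \in vs -> x <= y) ->
  (forall p, p \in js -> 0 <= p.2 <= p.1) ->
  (forall x p, x \in xs -> p \in js -> x <= p.1) ->
  (1 + \sum_(x <- xs) x - \sum_(y <- vs) y - \sum_(p <- js) p.2)
     * (\prod_(y <- vs) (1 + y) * \prod_(p <- js) (1 + p.1))
    <= \prod_(x <- xs) (1 + x) * \prod_(p <- js) (1 + p.1 - p.2).
Proof.
elim: js => [|[y d] js IH] vs Hx Hv Hxv Hj Hxj.
  rewrite !big_nil subr0 !mulr1; exact: vtx.
have Hj' : forall p, p \in js -> 0 <= p.2 <= p.1 by move=> p hp; apply: Hj; rewrite inE hp orbT.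
have Hxj' : forall x p, x \in xs -> p \in js -> x <= p.1.
  by move=> x p hx hp; apply: Hxj => //; rewrite inE hp orbT.
have /andP [d0 dy] : 0 <= d <= y by apply: (Hj (y, d)); rewrite inE eqxx.
have IH1 := IH vs Hx Hv Hxv Hj' Hxj'.
have IH2 : (1 + \sum_(x <- xs) x - \sum_(z <- y :: vs) z - \sum_(p <- js) p.2)
     * (\prod_(z <- y :: vs) (1 + z) * \prod_(p <- js) (1 + p.1))
    <= \prod_(x <- xs) (1 + x) * \prod_(p <- js) (1 + p.1 - p.2).
  apply: IH => //.
  - by move=> z; rewrite inE => /orP [/eqP ->|]; [lra|apply: Hv].
  - move=> x z hx; rewrite inE => /orP [/eqP ->|]; last exact: Hxv.
    exact: (Hxj x (y, d)) (mem_head _ _).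
move: IH1 IH2; rewrite !big_cons /=.
have V0 : 0 <= \prod_(z <- vs) (1 + z) by apply: prod1p_ge0.
have J0 : 0 <= \prod_(p <- js) (1 + p.1).
  rewrite big_seq; apply: prodr_ge0 => p /Hj' /andP [] ? ?; lra.
set X := \sum_(x <- xs) x; set V := \sum_(_ <- vs) _; set D := \sum_(_ <- js) _.
set PV := \prod_(_ <- vs) _; set PJ := \prod_(p <- js) (1 + p.1).
set XP := \prod_(x <- xs) (1 + x). set LJ := \prod_(p <- js) (1 + p.1 - p.2).
move=> IH1 IH2.
set R := 1 + X - V - D.
have Pi0 : 0 <= PV * PJ by apply: mulr_ge0.
have e1 : (1 + X - (y + V) - D) = R - y by rewrite /R; ring.
rewrite e1 in IH2.
have -> : XP * ((1 + y - d) * LJ) = (1 + y - d) * (XP * LJ) by ring.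
have -> : (1 + X - V - (d + D)) * (PV * ((1 + y) * PJ)) = (R - d) * ((1 + y) * (PV * PJ)) by rewrite /R; ring.
have e2 : (R - y) * ((1 + y) * PV * PJ) = (R - y) * ((1 + y) * (PV * PJ)) by ring.
rewrite e2 in IH2.
set M := XP * LJ. set Pi := PV * PJ.
rewrite -/R -/M -/Pi in IH1. rewrite -/M -/Pi in IH2.
have [y0|ypos] := eqVneq y 0.
  have d00 : d = 0 by lra.
  rewrite y0 d00 !subr0 !mul1r; exact: IH1.
have yp : 0 < y by rewrite lt_def ypos; lra.
have h1 : 0 <= (y - d) * (1 + y) * (M - R * Pi) by apply: mulr_ge0; [apply: mulr_ge0|]; lra.
have h2 : 0 <= d * (M - (R - y) * ((1 + y) * Pi)) by apply: mulr_ge0; lra.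
have h3 : 0 <= y * ((1 + y - d) * M - (R - d) * ((1 + y) * Pi)).
  have -> : y * ((1 + y - d) * M - (R - d) * ((1 + y) * Pi))
     = (y - d) * (1 + y) * (M - R * Pi) + d * (M - (R - y) * ((1 + y) * Pi)) by ring.
  lra.
rewrite pmulr_rge0 // in h3. lra.
Qed.

Lemma sum_sub1 (s : seq nat) (F : nat -> int) :
  \sum_(i <- s) (F i - 1) = \sum_(i <- s) F i - (size s)%:R.
Proof.
elim: s => [|i s IH]; first by rewrite !big_nil subr0.
by rewrite !big_cons IH /= -add1n natrD; ring.
Qed.

Theorem proposition5p6 (m : nat) (e b : nat -> int) (b0 : int)
  (he1 : forall i : nat, (1 <= i <= m)%N -> 1 <= e i)
  (hmono : forall i j : nat, (1 <= i)%N -> (i <= j)%N -> (j <= m)%N -> e i <= e j)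
  (hb : forall i : nat, (1 <= i <= m)%N -> 0 <= b i <= e i - 1)
  (hb0 : 1 <= b0) :
  forall k : nat, (k < m)%N ->
    \prod_(1 <= i < m.+1) (e i - b i) >=
    (\sum_(1 <= i < k.+2) (e i - b i) - (k%:Z - 1) - b0
       - \sum_(k.+2 <= i < m.+1) b i) * \prod_(k.+2 <= i < m.+1) e i.
Proof.
move=> k km.
have := @gen [seq e i - b i - 1 | i <- index_iota 1 k.+2]
              [seq (e j - 1, b j) | j <- index_iota k.+2 m.+1] [::].
rewrite !big_map !big_nil subr0 mul1r.
have E1 : \prod_(j <- index_iota k.+2 m.+1) (1 + (e j - 1)) = \prod_(k.+2 <= j < m.+1) e j.
  by apply: eq_bigr => j _; ring.
have E2 : \prod_(j <- index_iota 1 k.+2) (1 + (e j - b j - 1)) = \prod_(1 <= j < k.+2) (e j - b j).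
  by apply: eq_bigr => j _; ring.
have E3 : \prod_(j <- index_iota k.+2 m.+1) (1 + (e j - 1) - b j) = \prod_(k.+2 <= j < m.+1) (e j - b j).
  by apply: eq_bigr => j _; ring.
have E4 : \prod_(1 <= i < m.+1) (e i - b i) =
   \prod_(1 <= j < k.+2) (e j - b j) * \prod_(k.+2 <= j < m.+1) (e j - b j).
  by rewrite (@big_cat_nat _ _ _ k.+2).  
have E5 : ((k.+2 - 1)%N%:R : int) = k%:Z + 1 by rewrite subn1 /= -natz -addn1 natrD.
rewrite E1 E2 E3 sum_sub1 size_iota E4 E5.
have E0 : 0 <= \prod_(k.+2 <= j < m.+1) e j.
  rewrite big_seq; apply: prodr_ge0 => j; rewrite mem_index_iota => /andP [h1 h2].
  have := he1 j; rewrite (leq_trans _ h1) //= -ltnS h2 => /(_ isT); lra.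
move=> H; apply: le_trans (H _ _ _ _ _).
- apply: ler_wpM2r => //=; lra.
- move=> x /mapP [i]; rewrite mem_index_iota => /andP [i1 i2] ->.
  have im : (i <= m)%N by rewrite -ltnS (leq_trans i2).
  have /andP [? ?] := hb i (introT andP (conj i1 im)); lra.
- by [].
- by [].
- move=> p /mapP [j]; rewrite mem_index_iota => /andP [j1 j2] -> /=.
  have j0 : (0 < j)%N by apply: leq_trans j1.
  have /andP [? ?] := hb j (introT andP (conj j0 j2)); lra.
- move=> x p /mapP [i]; rewrite mem_index_iota => /andP [i1 i2] -> /mapP [j].
  rewrite mem_index_iota => /andP [j1 j2] -> /=.
  have im : (i <= m)%N by rewrite -ltnS (leq_trans i2).
  have /andP [? ?] := hb i (introT andP (conj i1 im)).
  have := hmono i j i1 (ltnW (leq_trans i2 j1)) j2; lra.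
Qed.
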